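(* Let $0<q<1$ and let $X$ be a random variable such that $A(a)=\mathbb{E}\exp_q(aX)$ is finite for all $a>0$. Then $\theta(a)=\dfrac{a}{A(a)^{1-q}}$ is an increasing function of $a$ on $(0,\infty)$.
   Context: For $q\in(0,2)$, $q\ne1$, the $q$-deformed exponential is $\exp_q(u)=[1+(1-q)u]_+^{1/(1-q)}$ for real $u$, where $[u]_+=\max(u,0)$. *)

(* Defs.v *)
From HB Require Import structures.
From mathcomp Require Import all_boot all_order all_algebra.
From mathcomp Require Import all_classical all_reals all_analysis.
Set Implicit Arguments. Unset Strict Implicit. Unset Printing Implicit Defensive.
Import Order.TTheory GRing.Theory Num.Theory.
Local Open Scope ring_scope.

Definition expq {R : realType} (q u : R) : R :=
  powR (Num.max (1 + (1 - q) * u) 0) (1 / (1 - q)).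

(* A(a) = E[exp_q(a X)]  (as a real number; used where it is finite) *)
Definition Aq {R : realType} {d} {T : measurableType d} (P : probability T R)
  (X : T -> R) (q a : R) : R :=
  fine (\int[P]_x (expq q (a * X x))%:E)%E.

Definition thetaq {R : realType} {d} {T : measurableType d} (P : probability T R)
  (X : T -> R) (q a : R) : R :=
  a / powR (Aq P X q a) (1 - q).

(* Main.v *)
Require Import Defs.
From HB Require Import structures.
From mathcomp Require Import all_boot all_order all_algebra.
From mathcomp Require Import all_classical all_reals all_analysis.
From mathcomp Require Import measurable_realfun.
From mathcomp Require Import ring lra.
Import Order.TTheory GRing.Theory Num.Theory.
Local Open Scope ring_scope.

Lemma mexpq (R : realType) (q c : R) :
  measurable_fun setT (fun u : R => expq q (c * u)).
Proof.
rewrite /expq.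
rewrite (_ : (fun u => _) = (fun v => v `^ (1/(1-q))) \o (fun u => Num.max (1 + (1 - q) * (c * u)) 0)) //.
apply: measurableT_comp; first exact: measurable_powR.
apply: (measurable_maxr (f := fun u => 1 + (1 - q) * (c * u)) (g := cst 0)).
  apply: measurable_funD => //; apply: measurable_funM => //; apply: measurable_funM => //.
exact: measurable_cst.
Qed.

Lemma pointwise (R : realType) (q a b u : R) : 0 < q -> q < 1 -> 0 < a -> a < b ->
  a `^ (1/(1-q)) * expq q (b * u) <= b `^ (1/(1-q)) * expq q (a * u) /\
  (0 < expq q (a * u) ->
  a `^ (1/(1-q)) * expq q (b * u) < b `^ (1/(1-q)) * expq q (a * u)).
Proof.
move=> q0 q1 a0 ab; have b0 : 0 < b by apply: lt_trans ab.
have p0 : 0 < 1 - q by rewrite subr_gt0.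
have r0 : 0 < 1 / (1 - q) by rewrite divr_gt0.
have Ha : a * Num.max (1 + (1 - q) * (b * u)) 0 = Num.max (a + (1 - q) * a * b * u) 0.
  rewrite maxr_pMr ?ltW // mulr0; congr (Num.max _ _); ring.
have Hb : b * Num.max (1 + (1 - q) * (a * u)) 0 = Num.max (b + (1 - q) * a * b * u) 0.
  rewrite maxr_pMr ?ltW // mulr0; congr (Num.max _ _); ring.
have mge0 : forall v : R, 0 <= Num.max v 0 by move=> v; rewrite le_max lexx orbT.
have La : a `^ (1 / (1 - q)) * expq q (b * u) = (Num.max (a + (1 - q) * a * b * u) 0) `^ (1 / (1 - q)).
  by rewrite /expq -powRM ?(ltW a0) ?mge0 //; congr (_ `^ _); exact: Ha.
have Lb : b `^ (1 / (1 - q)) * expq q (a * u) = (Num.max (b + (1 - q) * a * b * u) 0) `^ (1 / (1 - q)).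
  by rewrite /expq -powRM ?(ltW b0) ?mge0 //; congr (_ `^ _); exact: Hb.
rewrite La Lb; split.
  apply: (ge0_ler_powR (ltW r0)); rewrite ?nnegrE //.
  by apply: le_max2 => //; rewrite lerD2r ltW.
move=> pos.
have m0 : Num.max (1 + (1 - q) * (a * u)) 0 != 0.
  by apply: contraTneq pos => H; rewrite /expq H powR0 ?ltxx // gt_eqF.
have h1 : 0 < 1 + (1 - q) * (a * u).
  rewrite ltNge; apply/negP => H; move: m0; rewrite max_r ?eqxx //.
have hb : 0 < b + (1 - q) * a * b * u.
  have -> : b + (1 - q) * a * b * u = b * (1 + (1 - q) * (a * u)) by ring.
  by rewrite mulr_gt0.
apply: (gt0_ltr_powR r0); rewrite ?nnegrE //.
rewrite (max_l (ltW hb)) gt_max hb andbT ltrD2r ab //.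
Qed.

Lemma final (R : realType) (q a b A B : R) : 0 < q -> q < 1 -> 0 < a -> 0 < b ->
  0 < A -> 0 < B ->
  a `^ (1 / (1 - q)) * B < b `^ (1 / (1 - q)) * A ->
  a / A `^ (1 - q) < b / B `^ (1 - q).
Proof.
move=> q0 q1 a0 b0 FA FB key.
have p0 : 0 < 1 - q by rewrite subr_gt0.
have PA : 0 < A `^ (1 - q) by apply: powR_gt0.
have PB : 0 < B `^ (1 - q) by apply: powR_gt0.
have key2 : a * B `^ (1 - q) < b * A `^ (1 - q).
  have := gt0_ltr_powR p0 _ _ key.
  rewrite !powRM ?powR_ge0 ?ltW // -!powRrM.
  have -> : 1 / (1 - q) * (1 - q) = 1 by field; rewrite gt_eqF.
  rewrite !powRr1 ?ltW //; apply.
    by rewrite nnegrE mulr_ge0 ?powR_ge0 ?ltW.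
  by rewrite nnegrE mulr_ge0 ?powR_ge0 ?ltW.
rewrite -(ltr_pM2r (mulr_gt0 PA PB)).
have -> : a / A `^ (1 - q) * (A `^ (1 - q) * B `^ (1 - q)) = a * B `^ (1 - q).
  by field; rewrite gt_eqF.
have -> : b / B `^ (1 - q) * (A `^ (1 - q) * B `^ (1 - q)) = b * A `^ (1 - q).
  by field; rewrite gt_eqF.
exact: key2.
Qed.

Theorem lemma2 (R : realType) (d : measure_display) (T : measurableType d)
  (P : probability T R) (X : {RV P >-> R}) (q : R) :
  0 < q -> q < 1 ->
  (forall a : R, 0 < a -> (\int[P]_x (expq q (a * X x))%:E < +oo)%E) ->
  forall a b : R, 0 < a -> a < b ->
    0 < Aq P X q a -> 0 < Aq P X q b ->
    thetaq P X q a < thetaq P X q b.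
Proof.
move=> q0 q1 Hfin a b a0 ab Aa0 Ab0.
have b0 : 0 < b by apply: lt_trans ab.
have p0 : 0 < 1 - q by rewrite subr_gt0.
have r0 : 0 < 1 / (1 - q) by rewrite divr_gt0.
set r := 1 / (1 - q).
set f := fun x => expq q (a * X x).
set g := fun x => expq q (b * X x).
set ca := a `^ r. set cb := b `^ r.
have ca0 : 0 <= ca by exact: powR_ge0.
have cb0 : 0 <= cb by exact: powR_ge0.
have f0 x : 0 <= f x by exact: powR_ge0.
have g0 x : 0 <= g x by exact: powR_ge0.
have mf : measurable_fun setT f by apply: (measurableT_comp (mexpq _ q a)); exact: measurable_funPT.
have mg : measurable_fun setT g by apply: (measurableT_comp (mexpq _ q b)); exact: measurable_funPT.
set h := fun x => cb * f x - ca * g x.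
have PW x := @pointwise R q a b (X x) q0 q1 a0 ab.
have h0 x : 0 <= h x by rewrite /h subr_ge0; exact: (PW x).1.
have mh : measurable_fun setT h.
  by apply: measurable_funB; apply: measurable_funM => //; exact: measurable_cst.
set If := (\int[P]_x (f x)%:E)%E.
set Ig := (\int[P]_x (g x)%:E)%E.
set Ih := (\int[P]_x (h x)%:E)%E.
have If0 : (0 <= If)%E by apply: integral_ge0 => x _; rewrite lee_fin.
have Ig0 : (0 <= Ig)%E by apply: integral_ge0 => x _; rewrite lee_fin.
have Ih0 : (0 <= Ih)%E by apply: integral_ge0 => x _; rewrite lee_fin.
have Iffin : If \is a fin_num by rewrite ge0_fin_numE //; exact: (Hfin a a0).
have Igfin : Ig \is a fin_num by rewrite ge0_fin_numE //; exact: (Hfin b b0).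
have E : (cb%:E * If = ca%:E * Ig + Ih)%E.
  rewrite /If /Ig /Ih.
  rewrite -(ge0_integralZl_EFin _ measurableT); last exact: cb0.
    2: by move=> x _; rewrite lee_fin.
    2: exact/measurable_EFinP.
  rewrite -(ge0_integralZl_EFin _ measurableT); last exact: ca0.
    2: by move=> x _; rewrite lee_fin.
    2: exact/measurable_EFinP.
  rewrite -(ge0_integralD _ measurableT); last first.
  - exact/measurable_EFinP.
  - by move=> x _; rewrite lee_fin.
  - by apply/measurable_EFinP; apply: measurable_funM => //; exact: measurable_cst.
  - by move=> x _; rewrite lee_fin mulr_ge0.
  apply: eq_integral => x _; rewrite -!EFinM -EFinD; congr (_%:E).
  by rewrite /h addrC subrK.
have Ihpos : (0 < Ih)%E.
  rewrite lt_def Ih0 andbT; apply/negP => /eqP Ih00.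
  have Hae : ae_eq P setT (fun x => (h x)%:E) (cst 0%E).
    apply/(ae_eq_integral_abs P measurableT (f := fun x => (h x)%:E)).
      exact/measurable_EFinP.
    rewrite -[RHS]Ih00; apply: eq_integral => x _; rewrite gee0_abs // lee_fin h0 //.
  have Hae2 : ae_eq P setT (fun x => (f x)%:E) (cst 0%E).
    move: Hae; apply: filterS => x /= Hx Tx.
    have hx : h x = 0 by case: (Hx Tx).
    case: (eqVneq (f x) 0) => [->//|fx]; exfalso.
    have fpos : 0 < f x by rewrite lt_def fx f0.
    have := (PW x).2 fpos; rewrite -subr_gt0.
    by rewrite (_ : _ - _ = h x) // hx ltxx.
  have : If = 0%E.
    rewrite /If (ae_eq_integral (cst 0%E)) //; first exact: integral0.
    exact/measurable_EFinP.
  move=> If00; move: Aa0; rewrite /Aq -/f -/If If00 /= ltxx //.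
have key : ((ca * fine Ig)%:E < (cb * fine If)%:E)%E.
  rewrite EFinM (EFinM cb) (fineK Igfin) (fineK Iffin) E lteDl ?fin_numM //.
rewrite lte_fin in key.
exact: (@final R q a b (fine If) (fine Ig) q0 q1 a0 b0 Aa0 Ab0 key).
Qed.
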